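(* For every integer $n\geq 4$ there exist connected graphs $G$ and $H$ on $n$ vertices such that $\psi(G)=\psi(H)$ but $G$ and $H$ are not isomorphic.
   Context: All graphs are finite, simple and nonempty. For a graph $G$ and a positive integer $k$, a $k$-path vertex cover ($k$-PVC) of $G$ is a set $S$ of vertices such that every path on $k$ vertices in $G$ contains at least one vertex of $S$ (if $G$ has no path on $k$ vertices, the empty set is a $k$-PVC). $\psi_k(G)$ denotes the minimum cardinality of a $k$-PVC of $G$. For a graph $G$ on $n$ vertices, the path sequence of $G$ is $\psi(G)=(\psi_1(G),\psi_2(G),\ldots,\psi_n(G))$. *)

(* Defs.v *)
From mathcomp Require Import all_boot.
From mathcomp Require Import tuple.
Set Implicit Arguments. Unset Strict Implicit. Unset Printing Implicit Defensive.

Record sgraph (n : nat) := SGraph {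
  adj : rel 'I_n;
  adj_sym : symmetric adj;
  adj_irr : irreflexive adj }.

Definition is_kpath n (G : sgraph n) (k : nat) (p : seq 'I_n) : bool :=
  [&& size p == k, uniq p & match p with
                            | [::] => true
                            | x :: q => path (adj G) x q end].

Definition is_kpvc n (G : sgraph n) (k : nat) (S : {set 'I_n}) : bool :=
  [forall p : k.-tuple 'I_n, is_kpath G k p ==> has (fun v => v \in S) p].

(* psi_k(G): minimum cardinality of a k-PVC. For k >= 1, the full vertex set
   is a k-PVC of size n, so the minimum with default n is exact. *)
Definition psi n (G : sgraph n) (k : nat) : nat :=
  \big[minn/n]_(S : {set 'I_n} | is_kpvc G k S) #|S|.

Definition path_seq n (G : sgraph n) : seq nat := [seq psi G k | k <- iota 1 n].

Definition connected_graph n (G : sgraph n) : Prop :=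
  forall x y : 'I_n, connect (adj G) x y.

Definition isomorphic n (G H : sgraph n) : Prop :=
  exists f : 'I_n -> 'I_n, bijective f /\ forall x y, adj H (f x) (f y) = adj G x y.

(* Main.v *)
Require Import Defs.
From mathcomp Require Import all_boot zify.
Set Implicit Arguments. Unset Strict Implicit. Unset Printing Implicit Defensive.

Section G.
Variable n : nat.

Lemma psi_le (G : sgraph n) k S : is_kpvc G k S -> psi G k <= #|S|.
Proof.
move=> HS; rewrite /psi.
have : S \in index_enum {set 'I_n} by rewrite mem_index_enum.
elim: (index_enum _) => // a r IH; rewrite inE big_cons => /orP [/eqP <-|/IH h].
  by rewrite HS geq_minl.
by case: ifP => // _; rewrite geq_min h orbT.
Qed.

Lemma psi_ge (G : sgraph n) k m :
  (forall S, is_kpvc G k S -> m <= #|S|) -> m <= n -> m <= psi G k.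
Proof.
move=> H hm; rewrite /psi; elim/big_ind: _ => //.
move=> x y hx hy; rewrite leq_min hx hy //.
Qed.

Lemma cover_big (G : sgraph n) k (U : {set 'I_n}) : #|U| < k -> is_kpvc G k (~: U).
Proof.
move=> hU; apply/forallP => p; apply/implyP => /and3P [/eqP hs hu _].
apply/negPn/negP => /hasPn hn.
have : size p <= size (enum U).
  apply: uniq_leq_size => // x /hn; rewrite in_setC negbK mem_enum //.
rewrite -cardE size_tuple; lia.
Qed.

Definition kp (e : rel 'I_n) (p : seq 'I_n) := if p is x :: q then path e x q else true.

Lemma not_cover (G : sgraph n) k S (p : seq 'I_n) :
  size p = k -> uniq p -> kp (adj G) p -> {subset p <= ~: S} -> ~~ is_kpvc G k S.
Proof.
move=> hs hu hk hsub; apply/negP => /forallP /(_ (@Tuple k _ p (introT eqP hs))).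
rewrite /is_kpath /= hs eqxx hu /=.
have -> : (match p with [::] => true | x :: q => path (adj G) x q end) = kp (adj G) p by [].
rewrite hk /= => /hasP [x /hsub]; rewrite in_setC => /negP //.
Qed.

End G.

Definition pm (i : nat) : nat :=
  if i == 0 then 1 else if i == 1 then 0 else if i == 2 then 3 else if i == 3 then 2 else i.

Lemma pm_sym a b : a != b -> (b == pm a) = (a == pm b).
Proof.
by case: a => [|[|[|[|a]]]]; case: b => [|[|[|[|b]]]] //= _; rewrite eq_sym.
Qed.

Section H.
Variable n : nat.

Definition adjH (x y : 'I_n) := (x != y) && (val y != pm (val x)).
Definition adjG (x y : 'I_n) := (x != y) && (val x + val y != 1).

Lemma adjH_sym : symmetric adjH.
Proof.
move=> x y; rewrite /adjH eq_sym; case: (eqVneq y x) => //= hxy.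
congr negb; apply: pm_sym; by rewrite val_eqE eq_sym.
Qed.
Lemma adjH_irr : irreflexive adjH.
Proof. by move=> x; rewrite /adjH eqxx. Qed.
Lemma adjG_sym : symmetric adjG.
Proof. by move=> x y; rewrite /adjG eq_sym addnC. Qed.
Lemma adjG_irr : irreflexive adjG.
Proof. by move=> x; rewrite /adjG eqxx. Qed.

Lemma adjHG x y : adjH x y -> adjG x y.
Proof.
rewrite /adjH /adjG => /andP [-> h]; apply: contra h.
by case: x => [[|[|x]]] /=; case: y => [[|[|y]]].
Qed.

Lemma nonadj x v w : v != w -> x != v -> x != w -> adjH x v || adjH x w.
Proof.
rewrite /adjH => hvw -> ->; rewrite /=.
case: (eqVneq (val v) (pm x)) => //= e1; case: (eqVneq (val w) (pm x)) => //= e2.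
by move: hvw; rewrite -(inj_eq val_inj) /= e1 e2 eqxx.
Qed.

Lemma ext (x : 'I_n) q v : path adjH x q -> q != [::] -> uniq (x :: q) -> v \notin x :: q ->
  exists p, [/\ kp adjH p, uniq p, size p = (size q).+2 & {subset p <= v :: x :: q}].
Proof.
move=> hp hq hu hv.
have hvx : v != x by apply: contra hv => /eqP ->; rewrite mem_head.
have hvl : v != last x q by apply: contra hv => /eqP ->; rewrite mem_last.
have hxl : x != last x q.
  case/lastP: q hq hu {hp hv hvl} => // q y _; rewrite last_rcons /= mem_rcons inE negb_or.
  by case/andP => /andP [] //.
case/orP: (nonadj hxl hvx hvl) => h.
  exists (v :: x :: q); split; [by rewrite /= h hp | by rewrite cons_uniq hv hu | by [] | by []].
exists (rcons (x :: q) v); split.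
- by rewrite /= rcons_path hp adjH_sym h.
- by rewrite rcons_uniq hv hu.
- by rewrite size_rcons.
- by move=> y; rewrite mem_rcons.
Qed.

Lemma core (s : seq 'I_n) : uniq s -> 3 <= size s ->
  exists p, [/\ kp adjH p, uniq p, size p = size s & {subset p <= s}].
Proof.
elim: s => // v s IH /= /andP [hv hu] hs.
case: (ltnP 2 (size s)) => h3.
  have [[|x q] [hk hpu hps hsub]] := IH hu h3; first by move: hps => /= hh; lia.
  have hq : q != [::] by case: q {hk hpu hsub} hps => //= hh; lia.
  have hv' : v \notin x :: q by apply: contra hv => /hsub.
  have [p [h1 h2 h3' h4]] := ext hk hq hpu hv'.
  exists p; split => //; first by rewrite h3' -hps.
  by move=> y /h4; rewrite inE => /orP [/eqP ->|/hsub hy]; rewrite inE ?eqxx // hy orbT.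
case: s hs hv hu h3 {IH} => [|b [|c [|d s]]] //= _.
rewrite !inE !negb_or => /andP [hvb hvc] /andP [hbc _] _.
move: hbc; rewrite ?andbT => hbc.
case/orP: (nonadj hbc hvb hvc) => h.
- have hp : path adjH v [:: b] by rewrite /= h.
  have hu : uniq [:: v; b] by rewrite /= inE hvb.
  have hn : c \notin [:: v; b] by rewrite !inE negb_or eq_sym hvc eq_sym hbc.
  have [p [h1 h2 h3 h4]] := ext hp isT hu hn.
  exists p; split => // y /h4; rewrite !inE; by case/or3P => ->; rewrite ?orbT.
- have hp : path adjH v [:: c] by rewrite /= h.
  have hu : uniq [:: v; c] by rewrite /= inE hvc.
  have hn : b \notin [:: v; c] by rewrite !inE negb_or eq_sym hvb hbc.
  have [p [h1 h2 h3 h4]] := ext hp isT hu hn.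
  exists p; split => // y /h4; rewrite !inE; by case/or3P => ->; rewrite ?orbT.
Qed.

End H.

Section Main.
Variable n : nat.
Hypothesis hn : 4 <= n.

Definition GG := SGraph (@adjG_sym n) (@adjG_irr n).
Definition HH := SGraph (@adjH_sym n) (@adjH_irr n).

Lemma psi_n (G : sgraph n) k : psi G k <= n.
Proof.
rewrite /psi; elim/big_ind: _ => //; last by move=> S _; apply: leq_trans (max_card _) _; rewrite card_ord.
move=> x y hx _; exact: leq_trans (geq_minl _ _) hx.
Qed.

Lemma mono k : psi HH k <= psi GG k.
Proof.
apply: psi_ge; last exact: psi_n.
move=> S hS; apply: psi_le; apply/forallP => p; apply/implyP => hp.
move/forallP/(_ p)/implyP: hS; apply.
case/and3P: hp => h1 h2 h3; rewrite /is_kpath h1 h2 /=.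
case: (tval p) h3 => //= x q; apply: sub_path => u v; exact: adjHG.
Qed.

Lemma big_comp (S : {set 'I_n}) k : k <= n -> #|S| <= n - k -> k <= #|~: S|.
Proof. move=> hk; by have := cardsC S; rewrite card_ord; lia. Qed.

Lemma pick_seq (U : {set 'I_n}) k : k <= #|U| ->
  exists s : seq 'I_n, [/\ uniq s, size s = k & {subset s <= U}].
Proof.
move=> hk; exists (take k (enum U)); split.
- by rewrite take_uniq ?enum_uniq.
- rewrite size_take; have e := cardE U; case: ltnP => // h; apply/eqP; rewrite eqn_leq h -e hk //.
- by move=> x /mem_take; rewrite mem_enum.
Qed.

Lemma lowH k : 1 <= k -> k <= n -> k != 2 -> n - k + 1 <= psi HH k.
Proof.
move=> h1 h2 h3; apply: psi_ge; last by lia.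
move=> S hS; rewrite leqNgt; apply/negP => hc.
have [s [hu hsz hsub]] := pick_seq (big_comp (S := S) (k := k) h2 ltac:(lia)).
move: hS; apply/negP.
case: (ltnP k 3) => hk.
  have k1 : k = 1 by lia.
  apply: (not_cover (p := s)) => //.
  by case: s hsz {hu hsub} => [|x [|]] //; rewrite k1.
have h3s : 3 <= size s by rewrite hsz.
have [p [q1 q2 q3 q4]] := core hu h3s.
apply: (not_cover (p := p)) => //; first by rewrite q3.
by move=> x /q4 /hsub.
Qed.

Lemma upG k : 1 <= k -> k <= n -> psi GG k <= n - k + 1.
Proof.
move=> hk1 hk.
set U := [set x in take k.-1 (enum 'I_n)].
have hU : #|U| = k.-1.
  rewrite cardsE (card_uniqP _); last by rewrite take_uniq ?enum_uniq.
  rewrite size_take size_enum_ord; case: ltnP => //; lia.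
apply: leq_trans (psi_le (@cover_big n GG k U _)) _.
  rewrite hU; lia.
have e : #|~: U| = n - k.-1 by have := cardsC U; rewrite card_ord hU; lia.
rewrite e; lia.
Qed.


Let v0 : 'I_n := Ordinal (leq_trans (isT : 1 <= 4) hn).
Let v1 : 'I_n := Ordinal (leq_trans (isT : 2 <= 4) hn).
Let v2 : 'I_n := Ordinal (leq_trans (isT : 3 <= 4) hn).
Let v3 : 'I_n := Ordinal hn.

Lemma upG2 : psi GG 2 <= n - 2.
Proof.
have hc : #|~: [set v0; v1]| = n - 2.
  have := cardsC [set v0; v1]; rewrite cards2 card_ord /=; lia.
rewrite -hc; apply: psi_le.
apply/forallP => p; apply/implyP => /and3P [_ hu hk].
case: p hu hk => [[|x [|y [|]]] //] /= _ _; rewrite andbT => hxy.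
rewrite /= !in_setC !in_set2 orbF -negb_and; apply/negP.
move=> /andP [hx hy]; move: hxy.
by case/orP: hx => /eqP ->; case/orP: hy => /eqP ->; rewrite /adjG /= ?eqxx.
Qed.

Lemma lowH2 : n - 2 <= psi HH 2.
Proof.
apply: psi_ge; last by lia.
move=> S hS; rewrite leqNgt; apply/negP => hc.
have [s [hu hsz hsub]] := pick_seq (big_comp (S := S) (k := 3) (ltnW hn) ltac:(lia)).
have h3s : 3 <= size s by rewrite hsz.
have [p [q1 q2 q3 q4]] := core hu h3s.
rewrite hsz in q3.
case: p q1 q2 q3 q4 => [|x [|y [|z [|]]]] //= q1 q2 _ q4.
move: hS; apply/negP; apply: (not_cover (p := [:: x; y])).
- by [].
- by move: q2; rewrite /= !inE negb_or andbT => /andP [/andP [-> _] _].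
- by rewrite /= andbT; case/andP: q1.
- move=> w hw; apply: hsub; apply: q4; move: hw; rewrite !inE => /orP [->|->] //; by rewrite ?orbT.
Qed.

Lemma toZero x : connect (adj HH) x v0.
Proof.
case: (eqVneq x v0) => [->|h0]; first exact: connect0.
case: (eqVneq x v1) => [->|h1].
  have a1 : adj HH v1 v2 by rewrite /= /adjH.
  have a2 : adj HH v2 v0 by rewrite /= /adjH.
  exact: connect_trans (connect1 a1) (connect1 a2).
apply: connect1; rewrite /= /adjH h0 /=.
move: h0 h1; rewrite -!(inj_eq val_inj) /=.
by case: x => [[|[|[|[|x]]]]].
Qed.

Lemma conH : connected_graph HH.
Proof.
move=> x y; apply: (connect_trans (toZero x)).
by rewrite sym_connect_sym ?toZero //; apply: adjH_sym.
Qed.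

Lemma conG : connected_graph GG.
Proof.
move=> x y; apply: connect_sub (conH x y) => u v h; apply: connect1; exact: adjHG.
Qed.

Lemma noniso : ~ isomorphic GG HH.
Proof.
case=> f [[g fK gK] hf].
have key u w : u != w -> adj HH u w = false -> val (g u) + val (g w) = 1.
  move=> huw h; have : adjG (g u) (g w) = false by rewrite -[adjG _ _]/(adj GG _ _) -hf !gK.
  rewrite /adjG (inj_eq (can_inj gK)) huw /= => /negbFE /eqP //.
have e1 := key v0 v1 isT erefl.
have e2 := key v2 v3 isT erefl.
have d u w : u != w -> val (g u) != val (g w).
  by move=> h; rewrite (inj_eq val_inj) (inj_eq (can_inj gK)).
have := d v0 v2 isT; have := d v0 v3 isT; have := d v1 v2 isT; have := d v1 v3 isT.
move=> /eqP ? /eqP ? /eqP ? /eqP ?; lia.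
Qed.

Lemma same_seq : path_seq GG = path_seq HH.
Proof.
apply/eq_in_map => k; rewrite mem_iota => /andP [h1 h2].
have h2' : k <= n by lia.
apply/eqP; rewrite eqn_leq mono andbT.
case: (eqVneq k 2) => [->|hk2].
  exact: leq_trans upG2 lowH2.
exact: leq_trans (upG h1 h2') (lowH h1 h2' hk2).
Qed.

End Main.

Theorem mainTheorem7 (n : nat) (hn : 4 <= n) :
  exists G H : sgraph n,
    [/\ connected_graph G, connected_graph H,
        path_seq G = path_seq H & ~ isomorphic G H].
Proof.
exists (GG n), (HH n); split.
- exact: conG hn.
- exact: conH hn.
- exact: same_seq.
- exact: noniso hn.
Qed.
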